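(* Let $n_1,n_2$ be positive integers, ${\bf P}_c=(p_{c1},\dots,p_{ck})$, $c=1,2$, probability vectors, and let $X_{1i},X_{2i}$, $1\le i\le k$, be mutually independent Poisson random variables with means $\lambda_{1i}=n_1p_{1i}$ and $\lambda_{2i}=n_2p_{2i}$ respectively. Define, with $\xi_i=p_{1i}-p_{2i}$, $$f_i(x_1,x_2)=f^*(x_1,x_2)-\xi_i^2-2\xi_i\left(\frac{x_1}{n_1}-\frac{x_2}{n_2}\right)+2\xi_i^2 .$$ Then: (1) $E f_i(X_{1i},X_{2i})=0$ for each $i$; (2) $\mathrm{Cov}\left(\sum_{i=1}^k f_i(X_{1i},X_{2i}),\sum_{i=1}^kX_{ci}\right)=0$ for $c=1,2$; (3) $\mathrm{Var}\left(\sum_{i=1}^k f_i(X_{1i},X_{2i})\right)=\sum_{i=1}^k\mathrm{Var}(f_i(X_{1i},X_{2i}))=2\sum_{i=1}^k\left(\frac{p_{1i}}{n_1}+\frac{p_{2i}}{n_2}\right)^2.$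
   Context: $f^*(x_1,x_2)=\left(\frac{x_1}{n_1}-\frac{x_2}{n_2}\right)^2-\frac{x_1}{n_1^2}-\frac{x_2}{n_2^2}$. *)

(* Defs.v *)
From HB Require Import structures.
From mathcomp Require Import all_boot all_order all_algebra.
From mathcomp Require Import all_classical all_reals all_analysis.
Set Implicit Arguments. Unset Strict Implicit. Unset Printing Implicit Defensive.
Import Order.TTheory GRing.Theory Num.Theory.
Local Open Scope classical_set_scope.
Local Open Scope ring_scope.

Definition fstar {R : realType} (n1 n2 : nat) (x1 x2 : R) : R :=
  (x1 / n1%:R - x2 / n2%:R) ^+ 2 - x1 / (n1%:R ^+ 2) - x2 / (n2%:R ^+ 2).

Definition fi {R : realType} (n1 n2 : nat) (p1 p2 : R) (x1 x2 : R) : R :=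
  let xi := p1 - p2 in
  fstar n1 n2 x1 x2 - xi ^+ 2 - 2 * xi * (x1 / n1%:R - x2 / n2%:R)
  + 2 * xi ^+ 2.

Definition mutually_independent {d} {T : measurableType d} {R : realType}
  (P : probability T R) (I : finType) (Y : I -> {RV P >-> nat}) : Prop :=
  forall (J : {set I}) (A : I -> set nat), (forall j, measurable (A j)) ->
    P [set w | forall j, j \in J -> A j (Y j w)] =
    (\prod_(j in J) P (Y j @^-1` A j))%E.

Definition join_fam {d} {T : measurableType d} {R : realType}
  {P : probability T R} (k : nat) (X1 X2 : 'I_k -> {RV P >-> nat}) :
  'I_k + 'I_k -> {RV P >-> nat} :=
  fun j => match j with inl i => X1 i | inr i => X2 i end.

(* Main.v *)
Require Import Defs.
From HB Require Import structures.
From mathcomp Require Import all_boot all_order all_algebra.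
From mathcomp Require Import all_classical all_reals all_analysis.
From mathcomp Require Import measurable_realfun.
From mathcomp Require Import ring lra.
Import Order.TTheory GRing.Theory Num.Theory.
Local Open Scope classical_set_scope.
Local Open Scope ring_scope.

Set Implicit Arguments. Unset Strict Implicit. Unset Printing Implicit Defensive.

Section indep.
Context d (T : measurableType d) (R : realType) (P : probability T R).
Context (I : finType) (Y : I -> {RV P >-> nat}).

Lemma mfun_nat (f : nat -> R) : measurable_fun setT f.
Proof. by move=> _ B _. Qed.

Lemma mY (f : nat -> R) j : measurable_fun setT (fun w => f (Y j w)).
Proof. apply: measurableT_comp => //; exact: mfun_nat. Qed.

Lemma mpre j (A : set nat) : measurable (Y j @^-1` A).
Proof. by rewrite -[X in measurable X]setTI; apply: (measurable_funP (Y j)). Qed.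

Local Open Scope ereal_scope.

Lemma mYE (f : nat -> R) j : measurable_fun setT (EFin \o (fun w => f (Y j w))).
Proof. apply/measurable_EFinP; exact: mY. Qed.

Lemma series1 (a : nat -> \bar R) n0 : (forall m, 0 <= a m) ->
  (forall m, m != n0 -> a m = 0) -> \sum_(m <oo) a m = a n0.
Proof.
move=> a0 an.
rewrite (@nneseriesD1 _ a n0 xpredT) //= eseries0 ?adde0 //.
move=> i _ /= ni; exact: an.
Qed.

Lemma int_nat j (g : nat -> R) : (forall n, (0 <= g n)%R) ->
  \int[P]_w (g (Y j w))%:E = \sum_(m <oo) (g m)%:E * P (Y j @^-1` [set m]).
Proof.
move=> g0.
transitivity (\int[P]_w \sum_(m <oo) ((g m)%:E * (\1_(Y j @^-1` [set m]) w)%:E)).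
  apply: eq_integral => w _.
  rewrite (@series1 _ (Y j w)).
  - by rewrite indicE mem_set //= mule1.
  - by move=> m; rewrite mule_ge0 // lee_fin.
  - move=> m mY; rewrite indicE memNset ?mule0 //= => /esym /eqP.
    by rewrite (negbTE mY).
rewrite integral_nneseries //.
- apply: eq_eseriesr => m _.
  rewrite ge0_integralZl_EFin //.
  + rewrite integral_indic //; last exact: (mpre j [set m]).
    congr (_ * P _); apply/seteqP; split => [x []//|x ?]; by split.
  + apply/measurable_EFinP; apply: measurable_indic.
    exact: mpre.
- move=> n; apply: measurable_funeM; apply/measurable_EFinP.
  apply: measurable_indic.
  exact: mpre.
- by move=> m w _; rewrite mule_ge0 // lee_fin.
Qed.


Lemma int_indic_pre j (A : set nat) :
  \int[P]_w (\1_A (Y j w))%:E = P (Y j @^-1` A).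
Proof.
transitivity (\int[P]_w (\1_(Y j @^-1` A) w)%:E).
  by apply: eq_integral => w _; rewrite !indicE.
rewrite integral_indic //; last exact: mpre.
congr (P _); apply/seteqP; split => [x []//|x ?]; by split.
Qed.

Lemma prod_indic (A : I -> set nat) w :
  (\prod_j (\1_(A j) (Y j w) : R))%R =
  (\1_[set w | forall j, j \in [set: I]%SET -> A j (Y j w)] w : R).
Proof.
rewrite [RHS]indicE.
have [H|H] := pselect (forall j, A j (Y j w)).
  rewrite mem_set; last by move=> j _; apply: H.
  by rewrite big1 // => j _; rewrite indicE mem_set.
have [j0 nj0] : exists j0, ~ A j0 (Y j0 w).
  by apply/existsNP.
rewrite memNset; last by move=> /(_ j0 (finset.in_setT _)).
by rewrite (bigD1 j0) //= indicE memNset // mul0r.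
Qed.

Lemma mprodY (p : pred I) (h : I -> nat -> R) :
  measurable_fun setT (fun w => \prod_(j | p j) h j (Y j w))%R.
Proof.
under eq_fun do rewrite big_mkcond /=.
apply: measurable_prod => j _; exact: (mY (fun n => if p j then h j n else 1%R) j).
Qed.

Definition hfun (L : {set I}) (A : I -> set nat) (g : I -> nat -> R) (j : I)
  : nat -> R := if j \in L then g j else \1_(A j).

Lemma indep_gen (hind : mutually_independent Y) n : forall (L : {set I}) (A : I -> set nat) (g : I -> nat -> R), #|L| = n ->
  (forall j m, (0 <= g j m)%R) ->
  (forall j, \int[P]_w (g j (Y j w))%:E < +oo) ->
  \int[P]_w (\prod_j hfun L A g j (Y j w))%:E =
  \prod_j \int[P]_w (hfun L A g j (Y j w))%:E.
Proof.
elim: n => [|n IH] L A g.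
  move/eqP; rewrite cards_eq0 => /eqP L0 g0 gfin.
  have E j : hfun L A g j = \1_(A j) by rewrite /hfun L0 finset.in_set0.
  transitivity (\int[P]_w (\1_[set w | forall j, j \in [set: I]%SET -> A j (Y j w)] w)%:E).
    apply: eq_integral => w _; rewrite -prod_indic; congr (_%:E).
    by apply: eq_bigr => j _; rewrite E.
  have EE : [set w | forall j, j \in [set: I]%SET -> A j (Y j w)] =
     \bigcap_(j in [set: I]) (Y j @^-1` A j).
    apply/seteqP; split => w /= H.
      by move=> j _; apply: H; rewrite finset.in_setT.
    by move=> j _; apply: H.
  rewrite integral_indic //; last first.
    by rewrite EE; apply: fin_bigcap_measurable => // j _; exact: mpre.
  rewrite (_ : _ `&` _ = [set w | forall j, j \in [set: I]%SET -> A j (Y j w)]); last first.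
    by apply/seteqP; split => [x []//|x ?]; split.
  etransitivity; first exact: (hind [set: I]%SET A (fun _ => Logic.I)).
  apply: eq_big => [j|j _]; first by rewrite finset.in_setT.
  by rewrite E int_indic_pre.
move=> cL g0 gfin.
have [j0 j0L] : exists j0, j0 \in L.
  by apply/card_gt0P; rewrite cL.
set L' := L :\ j0.
have cL' : #|L'| = n.
  by move: cL; rewrite (cardsD1 j0 L) j0L add1n => -[].
pose A' m := fun j => if j == j0 then [set m] else A j.
have hL'j m j : j != j0 -> hfun L' (A' m) g j = hfun L A g j.
  by move=> jj0; rewrite /hfun /A' in_setD1 (negbTE jj0).
have hL'j0 m : hfun L' (A' m) g j0 = \1_[set m].
  by rewrite /hfun /A' setD11 eqxx.
have hLj0 : hfun L A g j0 = g j0 by rewrite /hfun j0L.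
have h0 j m : (0 <= hfun L A g j m)%R.
  by rewrite /hfun; case: ifP => _ //; rewrite indicE.
have hfin j : \int[P]_w (hfun L A g j (Y j w))%:E \is a fin_num.
  rewrite /hfun; case: ifP => _; last first.
    by rewrite int_indic_pre fin_num_measure //; exact: mpre.
  rewrite ge0_fin_numE ?gfin //; apply: integral_ge0 => w _; rewrite lee_fin; exact: g0.
pose C := fun w => (\prod_(j | j != j0) hfun L A g j (Y j w))%R.
have C0 w : (0 <= C w)%R by apply: prodr_ge0 => j _.
pose K := \prod_(j | j != j0) \int[P]_w (hfun L A g j (Y j w))%:E.
have K0 : 0 <= K.
  by apply: prode_ge0 => j _; apply: integral_ge0 => w _; rewrite lee_fin.
have Kfin : K \is a fin_num.
  by apply: prode_fin_num => j _; exact: hfin.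
transitivity (\int[P]_w \sum_(m <oo) ((g j0 m)%:E * (\1_[set m] (Y j0 w) * C w)%:E)).
  apply: eq_integral => w _; rewrite (bigD1 j0) //= hLj0.
  rewrite (@series1 _ (Y j0 w)).
  - by rewrite indicE mem_set //= mul1r -EFinM.
  - by move=> m; rewrite mule_ge0 // lee_fin ?mulr_ge0 // indicE.
  - move=> m mY; rewrite indicE memNset ?mul0r ?mule0 //= => /esym /eqP.
    by rewrite (negbTE mY).
rewrite integral_nneseries //; last 2 first.
- move=> m; apply: measurable_funeM; apply/measurable_EFinP.
  apply: measurable_funM; first exact: (mY (\1_[set m]) j0).
  exact: mprodY.
- by move=> m w _; rewrite mule_ge0 // lee_fin ?mulr_ge0 // indicE.
transitivity (\sum_(m <oo) (((g j0 m)%:E * P (Y j0 @^-1` [set m])) * K)).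
  apply: eq_eseriesr => m _.
  rewrite ge0_integralZl_EFin //; last 2 first.
  - by move=> w _; rewrite lee_fin mulr_ge0 // indicE.
  - apply/measurable_EFinP.
    apply: measurable_funM; first exact: (mY (\1_[set m]) j0).
    exact: mprodY.
  rewrite -muleA; congr (_ * _).
  transitivity (\int[P]_w (\prod_j hfun L' (A' m) g j (Y j w))%:E).
    apply: eq_integral => w _; rewrite [in RHS](bigD1 j0) //= hL'j0.
    congr ((_ * _)%:E); apply: eq_bigr => j jj0; by rewrite hL'j.
  rewrite IH //; last first.
  rewrite (bigD1 j0) //= hL'j0 int_indic_pre; congr (_ * _).
  by apply: eq_bigr => j jj0; rewrite hL'j.
rewrite -(fineK Kfin).
under eq_eseriesr do rewrite muleC.
rewrite nneseriesZl; last by move=> m _; rewrite mule_ge0 // lee_fin.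
rewrite -int_nat // [RHS](bigD1 j0) //= hLj0 muleC fineK //.
Qed.

End indep.

Definition st (r s : nat) : nat :=
  nth 0%N (nth [::] [:: [:: 1%N]; [:: 0; 1]; [:: 0; 1; 1]; [:: 0; 1; 3; 1];
     [:: 0; 1; 7; 6; 1]]%N r) s.

Lemma pow_st (R : realType) (r : 'I_5) (n : nat) :
  (n%:R : R) ^+ r = \sum_(s < 5) (st r s)%:R * (n ^_ s)%:R.
Proof.
rewrite !big_ord_recr big_ord0 /=.
case: r => [[|[|[|[|[|r]]]]] //= _]; case: n => [|[|[|[|m]]]];
  rewrite ?ffactSS ?ffactn0 ?ffact0n /st /=; ring.
Qed.

Definition Mom {R : realType} (lam : R) (r : nat) : R :=
  \sum_(s < 5) (st r s)%:R * lam ^+ s.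

Definition qp {R : realType} (lam : R) (m : nat) : R := lam ^+ m / m`!%:R * expR (- lam).

Section poisson_moments.
Context d (T : measurableType d) (R : realType) (P : probability T R).
Context (X : {RV P >-> nat}) (lam : R) (lam0 : 0 <= lam)
  (hX : distribution P X = poisson_prob lam 0%N :> (set nat -> \bar R)).

Local Open Scope ereal_scope.

Lemma qp_ge0 m : (0 <= qp lam m)%R.
Proof. by rewrite /qp mulr_ge0 // ?expR_ge0 // divr_ge0 // exprn_ge0. Qed.

Lemma P_single m : P (X @^-1` [set m]) = (qp lam m)%:E.
Proof.
have -> : P (X @^-1` [set m]) = distribution P X [set m] by [].
rewrite hX /poisson_prob; case: ifPn => [l0|].
  by rewrite esum_set1 ?lee_fin ?poisson_pmf_ge0 // /poisson_pmf l0 /qp.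
rewrite -leNgt => l0; have -> : lam = 0%R by apply/eqP; rewrite eq_le l0 lam0.
rewrite diracE /qp oppr0 expR0 mulr1 expr0n; case: m => [|m] /=.
  by rewrite mem_set // fact0 divr1.
by rewrite memNset // mul0r.
Qed.

Lemma sum_qp : \sum_(m <oo) (qp lam m)%:E = 1.
Proof.
have := @int_nat _ _ _ P _ (fun _ => X) tt (fun _ => 1%R) (fun _ => ler01).
rewrite integral_cst //= probability_setT mule1 => ->.
by apply: eq_eseriesr => m _; rewrite mul1e P_single.
Qed.

Lemma mom_ff r : \int[P]_w (((X w) ^_ r)%:R)%:E = (lam ^+ r)%:E.
Proof.
rewrite (@int_nat _ _ _ P _ (fun _ => X) tt (fun n => (n ^_ r)%:R)) //.
under eq_eseriesr do rewrite P_single -EFinM.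
rewrite (@nneseries_split _ _ 0 r); last first.
  by move=> m; rewrite lee_fin mulr_ge0 // qp_ge0.
rewrite add0n big1_seq ?add0e; last first.
  move=> m /=; rewrite mem_iota add0n => /andP[_ mr].
  rewrite ffact_small //; have H0 : forall x : R, ((0%N)%:R * x)%R = 0%R by move=> x; rewrite mul0r.
  by rewrite H0.
  by rewrite subn0 in mr.
rewrite -nneseries_addn; last by move=> m; rewrite lee_fin mulr_ge0 // qp_ge0.
transitivity (\sum_(i <oo) ((lam ^+ r)%:E * (qp lam i)%:E)).
  apply: eq_eseriesr => i _; rewrite -EFinM; congr (_%:E).
  rewrite /qp exprD -(ffact_fact (leq_addl i r)) addnK natrM.
  have h1 : ((i + r) ^_ r)%:R != 0%R :> R by rewrite pnatr_eq0 -lt0n ffact_gt0 leq_addl.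
  have h2 : (i`!)%:R != 0%R :> R by rewrite pnatr_eq0 -lt0n fact_gt0.
  by field; rewrite h1 h2.
rewrite (@nneseriesZl _ (fun i => (qp lam i)%:E) xpredT) ?sum_qp ?mule1 //.
by move=> i _; rewrite lee_fin qp_ge0.
Qed.

Lemma mom_pow (r : 'I_5) :
  \int[P]_w (((X w)%:R : R) ^+ r)%:E = (Mom lam r)%:E.
Proof.
under eq_integral do rewrite pow_st -sumEFin.
rewrite ge0_integral_sum //; last first.
  move=> s; apply/measurable_EFinP; apply: measurable_funM => //.
  exact: (@mY _ _ _ P _ (fun _ : unit => X) (fun n => (n ^_ s)%:R) tt).
rewrite /Mom -sumEFin; apply: eq_bigr => s _.
under eq_integral do rewrite EFinM.
rewrite ge0_integralZl_EFin //; first by rewrite mom_ff -EFinM.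
apply/measurable_EFinP.
exact: (@mY _ _ _ P _ (fun _ : unit => X) (fun n => (n ^_ s)%:R) tt).
Qed.

End poisson_moments.

Section mono.
Context d (T : measurableType d) (R : realType) (P : probability T R).
Context (I : finType) (Y : I -> {RV P >-> nat}) (lam : I -> R)
  (hl : forall j, 0 <= lam j)
  (hY : forall j, distribution P (Y j) = poisson_prob (lam j) 0%N :> (set nat -> \bar R))
  (hind : mutually_independent Y).

Local Open Scope ereal_scope.

Lemma indep_prod (g : I -> nat -> R) : (forall j m, (0 <= g j m)%R) ->
  (forall j, \int[P]_w (g j (Y j w))%:E < +oo) ->
  \int[P]_w (\prod_j g j (Y j w))%:E = \prod_j \int[P]_w (g j (Y j w))%:E.
Proof.
move=> g0 gfin.
have E j : hfun [set: I]%SET (fun _ => set0) g j = g j by rewrite /hfun finset.in_setT.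
have H := @indep_gen _ _ _ P _ Y hind #|[set: I]%SET| [set: I]%SET (fun _ => set0) g erefl g0 gfin.
transitivity (\int[P]_w (\prod_j hfun [set: I]%SET (fun _ => set0) g j (Y j w))%:E).
  by apply: eq_integral => w _; congr EFin; apply: eq_bigr => j _; rewrite E.
by rewrite H; apply: eq_bigr => j _; rewrite E.
Qed.

Definition monf (e : I -> nat) (w : T) : R := (\prod_j ((Y j w)%:R ^+ e j))%R.

Lemma mon_E (e : I -> 'I_5) :
  \int[P]_w (monf e w)%:E = (\prod_j Mom (lam j) (e j))%:E.
Proof.
rewrite /monf (@indep_prod (fun j n => ((n%:R : R) ^+ e j)%R)).
- rewrite -prodEFin; apply: eq_bigr => j _.
  exact: (@mom_pow _ _ _ P (Y j) (lam j) (hl j) (hY j) (e j)).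
- by move=> j m; rewrite exprn_ge0.
- by move=> j; rewrite (@mom_pow _ _ _ P (Y j) (lam j) (hl j) (hY j) (e j)) ltry.
Qed.

Lemma mon_int (e : I -> 'I_5) : P.-integrable setT (EFin \o monf e).
Proof.
apply/integrableP; split.
  apply/measurable_EFinP; exact: (@mprodY _ _ _ P _ Y xpredT (fun j n => ((n%:R : R) ^+ e j)%R)).
have m0 w : (0 <= monf e w)%R by apply: prodr_ge0 => j _; exact: exprn_ge0.
under eq_integral do rewrite /= ger0_norm //.
by rewrite mon_E ltry.
Qed.

End mono.

Definition phi {R : realType} (c : 'I_5 -> 'I_5 -> R) (x1 x2 : R) : R :=
  \sum_(r < 5) \sum_(s < 5) c r s * x1 ^+ r * x2 ^+ s.
Definition Ev {R : realType} (c : 'I_5 -> 'I_5 -> R) (a b : R) : R :=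
  \sum_(r < 5) \sum_(s < 5) c r s * Mom a r * Mom b s.

Definition one {R : realType} : 'I_5 -> 'I_5 -> R :=
  fun r s => (((r : nat) == 0%N) && ((s : nat) == 0%N))%:R.

Lemma phi_one {R : realType} (x y : R) : phi one x y = 1.
Proof. rewrite /phi /one !big_ord_recr !big_ord0 /=; ring. Qed.

Lemma Ev_one {R : realType} (x y : R) : Ev one x y = 1.
Proof. rewrite /Ev /one /Mom /st !big_ord_recr !big_ord0 /=; ring. Qed.

Section block.
Context d (T : measurableType d) (R : realType) (P : probability T R).
Context (k : nat) (l1 l2 : 'I_k -> R) (X1 X2 : 'I_k -> {RV P >-> nat})
  (hl1 : forall i, 0 <= l1 i) (hl2 : forall i, 0 <= l2 i)
  (hd1 : forall i, distribution P (X1 i) = poisson_prob (l1 i) 0%N :> (set nat -> \bar R))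
  (hd2 : forall i, distribution P (X2 i) = poisson_prob (l2 i) 0%N :> (set nat -> \bar R))
  (hind : mutually_independent (join_fam X1 X2)).

Let Y := join_fam X1 X2.
Let lamj (j : 'I_k + 'I_k) : R := match j with inl i => l1 i | inr i => l2 i end.
Let hl j : 0 <= lamj j. Proof. by case: j. Qed.
Let hY j : distribution P (Y j) = poisson_prob (lamj j) 0%N :> (set nat -> \bar R).
Proof. by case: j. Qed.

Lemma block (c : 'I_k -> 'I_5 -> 'I_5 -> R) :
  P.-integrable setT (EFin \o (fun w => \prod_i phi (c i) (X1 i w)%:R (X2 i w)%:R)) /\
  (\int[P]_w (\prod_i phi (c i) (X1 i w)%:R (X2 i w)%:R)%:E =
   (\prod_i Ev (c i) (l1 i) (l2 i))%:E)%E.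
Proof.
pose ef (f : {ffun 'I_k -> 'I_5 * 'I_5}) (j : 'I_k + 'I_k) : 'I_5 :=
  match j with inl i => (f i).1 | inr i => (f i).2 end.
pose cf (f : {ffun 'I_k -> 'I_5 * 'I_5}) := \prod_i c i (f i).1 (f i).2.
have Gsum w : \prod_i phi (c i) (X1 i w)%:R (X2 i w)%:R =
    \sum_f cf f * monf Y (ef f) w.
  rewrite /phi; under eq_bigr do rewrite pair_big /=.
  rewrite bigA_distr_bigA; apply: eq_bigr => f _.
  rewrite /monf big_sumType /= !big_split /= -mulrA; congr (_ * (_ * _)).
have hint f : P.-integrable setT (EFin \o (fun w => cf f * monf Y (ef f) w)).
  apply: (eq_integrable measurableT _ _ _ (integrableZl measurableT (cf f) (mon_int hl hY hind (ef f)))).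
  by move=> w _ /=; rewrite EFinM.
split.
  apply: (eq_integrable measurableT (fun w => \sum_f (cf f * monf Y (ef f) w)%:E)).
    by move=> w _ /=; rewrite Gsum sumEFin.
  by apply: integrable_sum => // f _; exact: hint.
under eq_integral do rewrite Gsum -sumEFin.
rewrite integral_sum //.
rewrite /Ev; under eq_bigr do rewrite pair_big /=.
rewrite bigA_distr_bigA -sumEFin; apply: eq_bigr => f _.
under eq_integral do rewrite EFinM.
rewrite (integralZl measurableT (mon_int hl hY hind (ef f))).
rewrite (mon_E hl hY hind) -EFinM; congr EFin.
rewrite big_sumType /= !big_split /= -mulrA.
done.
Qed.

Lemma single (i : 'I_k) (c : 'I_5 -> 'I_5 -> R) :
  P.-integrable setT (EFin \o (fun w => phi c (X1 i w)%:R (X2 i w)%:R)) /\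
  (\int[P]_w (phi c (X1 i w)%:R (X2 i w)%:R)%:E = (Ev c (l1 i) (l2 i))%:E)%E.
Proof.
have [H1 H2] := block (fun m => if m == i then c else one).
have E w : \prod_m phi (if m == i then c else one) (X1 m w)%:R (X2 m w)%:R =
    phi c (X1 i w)%:R (X2 i w)%:R.
  rewrite (bigD1 i) //= eqxx big1 ?mulr1 // => m /negbTE ->; exact: phi_one.
split.
  by apply: (eq_integrable measurableT _ _ _ H1) => w _ /=; rewrite E.
transitivity (\int[P]_w (\prod_m phi (if m == i then c else one) (X1 m w)%:R (X2 m w)%:R)%:E)%E.
  by apply: eq_integral => w _; rewrite E.
rewrite H2 (bigD1 i) //= eqxx big1 ?mulr1 // => m /negbTE ->; exact: Ev_one.
Qed.

Lemma pairL (i j : 'I_k) (ij : i != j) (c c' : 'I_5 -> 'I_5 -> R) :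
  P.-integrable setT (EFin \o (fun w => phi c (X1 i w)%:R (X2 i w)%:R *
                                        phi c' (X1 j w)%:R (X2 j w)%:R)) /\
  (\int[P]_w (phi c (X1 i w)%:R (X2 i w)%:R * phi c' (X1 j w)%:R (X2 j w)%:R)%:E
   = (Ev c (l1 i) (l2 i) * Ev c' (l1 j) (l2 j))%:E)%E.
Proof.
pose cc m := if m == i then c else if m == j then c' else one.
have [H1 H2] := block cc.
have ji : j != i by rewrite eq_sym.
have E w : \prod_m phi (cc m) (X1 m w)%:R (X2 m w)%:R =
    phi c (X1 i w)%:R (X2 i w)%:R * phi c' (X1 j w)%:R (X2 j w)%:R.
  rewrite (bigD1 i) //= (bigD1 j) //= /cc eqxx (negbTE ji) eqxx big1 ?mulr1 //.
  by move=> m /andP[/negbTE -> /negbTE ->]; exact: phi_one.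
split.
  by apply: (eq_integrable measurableT _ _ _ H1) => w _ /=; rewrite E.
transitivity (\int[P]_w (\prod_m phi (cc m) (X1 m w)%:R (X2 m w)%:R)%:E)%E.
  by apply: eq_integral => w _; rewrite E.
rewrite H2 (bigD1 i) //= (bigD1 j) //= /cc eqxx (negbTE ji) eqxx big1 ?mulr1 //.
by move=> m /andP[/negbTE -> /negbTE ->]; exact: Ev_one.
Qed.

Lemma sum1 (c : 'I_k -> 'I_5 -> 'I_5 -> R) :
  P.-integrable setT (EFin \o (fun w => \sum_i phi (c i) (X1 i w)%:R (X2 i w)%:R)) /\
  (\int[P]_w (\sum_i phi (c i) (X1 i w)%:R (X2 i w)%:R)%:E =
   (\sum_i Ev (c i) (l1 i) (l2 i))%:E)%E.
Proof.
split.
  apply: (eq_integrable measurableT (fun w => \sum_i (phi (c i) (X1 i w)%:R (X2 i w)%:R)%:E)).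
    by move=> w _ /=; rewrite sumEFin.
  by apply: integrable_sum => // i _; exact: (single i (c i)).1.
under eq_integral do rewrite -sumEFin.
rewrite integral_sum //; last by move=> i; exact: (single i (c i)).1.
by rewrite -sumEFin; apply: eq_bigr => i _; exact: (single i (c i)).2.
Qed.

Lemma sum2 (c c' cc : 'I_k -> 'I_5 -> 'I_5 -> R)
  (hcc : forall i x y, phi (c i) x y * phi (c' i) x y = phi (cc i) x y) :
  P.-integrable setT (EFin \o (fun w => (\sum_i phi (c i) (X1 i w)%:R (X2 i w)%:R) *
                                        (\sum_j phi (c' j) (X1 j w)%:R (X2 j w)%:R))) /\
  (\int[P]_w ((\sum_i phi (c i) (X1 i w)%:R (X2 i w)%:R) *
               (\sum_j phi (c' j) (X1 j w)%:R (X2 j w)%:R))%:E =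
   (\sum_i \sum_j (if i == j then Ev (cc i) (l1 i) (l2 i)
                   else Ev (c i) (l1 i) (l2 i) * Ev (c' j) (l1 j) (l2 j)))%:E)%E.
Proof.
pose H i j w := phi (c i) (X1 i w)%:R (X2 i w)%:R * phi (c' j) (X1 j w)%:R (X2 j w)%:R.
have HE w : (\sum_i phi (c i) (X1 i w)%:R (X2 i w)%:R) *
            (\sum_j phi (c' j) (X1 j w)%:R (X2 j w)%:R) = \sum_i \sum_j H i j w.
  by rewrite big_distrl /=; apply: eq_bigr => i _; rewrite big_distrr.
have Hij i j : P.-integrable setT (EFin \o H i j) /\
    (\int[P]_w (H i j w)%:E = (if i == j then Ev (cc i) (l1 i) (l2 i)
                   else Ev (c i) (l1 i) (l2 i) * Ev (c' j) (l1 j) (l2 j))%:E)%E.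
  have [->|ij] := eqVneq i j; last exact: pairL.
  rewrite /H; have [A B] := single j (cc j).
  split.
    by apply: (eq_integrable measurableT _ _ _ A) => w _ /=; rewrite hcc.
  by rewrite -B; apply: eq_integral => w _; rewrite hcc.
have Hi i : P.-integrable setT (EFin \o (fun w => \sum_j H i j w)).
  apply: (eq_integrable measurableT (fun w => \sum_j (H i j w)%:E)).
    by move=> w _ /=; rewrite sumEFin.
  by apply: integrable_sum => // j _; exact: (Hij i j).1.
split.
  apply: (eq_integrable measurableT (fun w => \sum_i (\sum_j H i j w)%:E)).
    by move=> w _ /=; rewrite HE sumEFin.
  by apply: integrable_sum => // i _; exact: Hi.
under eq_integral do rewrite HE -sumEFin.
rewrite integral_sum //.
rewrite -sumEFin; apply: eq_bigr => i _.
under eq_integral do rewrite -sumEFin.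
rewrite integral_sum //; last by move=> j; exact: (Hij i j).1.
by rewrite -sumEFin; apply: eq_bigr => j _; exact: (Hij i j).2.
Qed.

End block.

Unset Implicit Arguments. Set Strict Implicit. Set Printing Implicit Defensive.

Definition mk {R : realType} (l : seq (seq R)) : 'I_5 -> 'I_5 -> R :=
  fun r s => nth 0 (nth [::] l r) s.

Definition cF {R : realType} (A B X : R) := mk
  [:: [:: X ^+ 2; - B ^+ 2 + 2 * X * B; B ^+ 2]; [:: - A ^+ 2 - 2 * X * A; -2 * A * B]; [:: A ^+ 2]].
Definition cFx1 {R : realType} (A B X : R) := mk
  [:: [:: 0]; [:: X ^+ 2; - B ^+ 2 + 2 * X * B; B ^+ 2]; [:: - A ^+ 2 - 2 * X * A; -2 * A * B]; [:: A ^+ 2]].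
Definition cFx2 {R : realType} (A B X : R) := mk
  [:: [:: 0; X ^+ 2; - B ^+ 2 + 2 * X * B; B ^+ 2]; [:: 0; - A ^+ 2 - 2 * X * A; -2 * A * B]; [:: 0; A ^+ 2]].
Definition cx1 {R : realType} : 'I_5 -> 'I_5 -> R := mk [:: [:: 0]; [:: 1]].
Definition cx2 {R : realType} : 'I_5 -> 'I_5 -> R := mk [:: [:: 0; 1]].
Definition cF2 {R : realType} (A B X : R) := mk
[:: [:: X ^+ 2*X ^+ 2; X ^+ 2*(-B ^+ 2+2*X*B) + (-B ^+ 2+2*X*B)*X ^+ 2; X ^+ 2*B ^+ 2 + (-B ^+ 2+2*X*B)*(-B ^+ 2+2*X*B) + B ^+ 2*X ^+ 2; (-B ^+ 2+2*X*B)*B ^+ 2 + B ^+ 2*(-B ^+ 2+2*X*B); B ^+ 2*B ^+ 2];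
 [:: X ^+ 2*(-A ^+ 2-2*X*A) + (-A ^+ 2-2*X*A)*X ^+ 2; X ^+ 2*(-2*A*B) + (-B ^+ 2+2*X*B)*(-A ^+ 2-2*X*A) + (-A ^+ 2-2*X*A)*(-B ^+ 2+2*X*B) + (-2*A*B)*X ^+ 2; (-B ^+ 2+2*X*B)*(-2*A*B) + B ^+ 2*(-A ^+ 2-2*X*A) + (-A ^+ 2-2*X*A)*B ^+ 2 + (-2*A*B)*(-B ^+ 2+2*X*B); B ^+ 2*(-2*A*B) + (-2*A*B)*B ^+ 2];
 [:: X ^+ 2*A ^+ 2 + (-A ^+ 2-2*X*A)*(-A ^+ 2-2*X*A) + A ^+ 2*X ^+ 2; (-B ^+ 2+2*X*B)*A ^+ 2 + (-A ^+ 2-2*X*A)*(-2*A*B) + (-2*A*B)*(-A ^+ 2-2*X*A) + A ^+ 2*(-B ^+ 2+2*X*B); B ^+ 2*A ^+ 2 + (-2*A*B)*(-2*A*B) + A ^+ 2*B ^+ 2];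
 [:: (-A ^+ 2-2*X*A)*A ^+ 2 + A ^+ 2*(-A ^+ 2-2*X*A); (-2*A*B)*A ^+ 2 + A ^+ 2*(-2*A*B)];
 [:: A ^+ 2*A ^+ 2]]
.

Definition Fpoly {R : realType} (A B X x y : R) : R :=
  (A * x - B * y) ^+ 2 - A ^+ 2 * x - B ^+ 2 * y + X ^+ 2 - 2 * X * (A * x - B * y).

Ltac unf := rewrite /phi /mk !big_ord_recr !big_ord0 /=.

Lemma phi_cF {R : realType} (A B X x y : R) : phi (cF A B X) x y = Fpoly A B X x y.
Proof. rewrite /cF /Fpoly; unf; ring. Qed.
Lemma phi_cFx1 {R : realType} (A B X x y : R) : phi (cFx1 A B X) x y = Fpoly A B X x y * x.
Proof. rewrite /cFx1 /Fpoly; unf; ring. Qed.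
Lemma phi_cFx2 {R : realType} (A B X x y : R) : phi (cFx2 A B X) x y = Fpoly A B X x y * y.
Proof. rewrite /cFx2 /Fpoly; unf; ring. Qed.
Lemma phi_cF2 {R : realType} (A B X x y : R) : phi (cF2 A B X) x y = Fpoly A B X x y ^+ 2.
Proof. rewrite /cF2 /Fpoly; unf; ring. Qed.
Lemma phi_cx1 {R : realType} (x y : R) : phi cx1 x y = x.
Proof. rewrite /cx1; unf; ring. Qed.
Lemma phi_cx2 {R : realType} (x y : R) : phi cx2 x y = y.
Proof. rewrite /cx2; unf; ring. Qed.

Lemma Mom_0 {R : realType} (a : R) : Mom a 0 = 1.
Proof. rewrite /Mom /st !big_ord_recr big_ord0 /=; ring. Qed.
Lemma Mom_1 {R : realType} (a : R) : Mom a 1 = a.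
Proof. rewrite /Mom /st !big_ord_recr big_ord0 /=; ring. Qed.
Lemma Mom_2 {R : realType} (a : R) : Mom a 2 = a ^+ 2 + a.
Proof. rewrite /Mom /st !big_ord_recr big_ord0 /=; ring. Qed.
Lemma Mom_3 {R : realType} (a : R) : Mom a 3 = a ^+ 3 + 3 * a ^+ 2 + a.
Proof. rewrite /Mom /st !big_ord_recr big_ord0 /=; ring. Qed.
Lemma Mom_4 {R : realType} (a : R) : Mom a 4 = a ^+ 4 + 6 * a ^+ 3 + 7 * a ^+ 2 + a.
Proof. rewrite /Mom /st !big_ord_recr big_ord0 /=; ring. Qed.

Ltac unfE := rewrite /Ev /mk !big_ord_recr !big_ord0 /= ?Mom_0 ?Mom_1 ?Mom_2 ?Mom_3 ?Mom_4 ?mul0r ?add0r ?addr0.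

Section evs.
Context {R : realType} (A B a b : R).

Lemma Ev_cF : Ev (cF A B (A * a - B * b)) a b = 0.
Proof. rewrite /cF. unfE. ring. Qed.
Lemma Ev_cFx1 : Ev (cFx1 A B (A * a - B * b)) a b = 0.
Proof. rewrite /cFx1. unfE. ring. Qed.
Lemma Ev_cFx2 : Ev (cFx2 A B (A * a - B * b)) a b = 0.
Proof. rewrite /cFx2. unfE. ring. Qed.
Lemma Ev_cF2 : Ev (cF2 A B (A * a - B * b)) a b = 2 * (A ^+ 2 * a + B ^+ 2 * b) ^+ 2.
Proof. rewrite /cF2. unfE. ring. Qed.
Lemma Ev_cx1 : Ev cx1 a b = a.
Proof. rewrite /cx1. unfE. ring. Qed.
Lemma Ev_cx2 : Ev cx2 a b = b.
Proof. rewrite /cx2. unfE. ring. Qed.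
End evs.


Theorem lemma2 (R : realType) (d : measure_display) (T : measurableType d)
  (P : probability T R) (k n1 n2 : nat) (p1 p2 : 'I_k -> R)
  (X1 X2 : 'I_k -> {RV P >-> nat}) :
  (0 < n1)%N -> (0 < n2)%N ->
  (forall i, 0 <= p1 i) -> \sum_(i < k) p1 i = 1 ->
  (forall i, 0 <= p2 i) -> \sum_(i < k) p2 i = 1 ->
  (forall i, distribution P (X1 i) = poisson_prob (n1%:R * p1 i) 0%N :> (set nat -> \bar R)) ->
  (forall i, distribution P (X2 i) = poisson_prob (n2%:R * p2 i) 0%N :> (set nat -> \bar R)) ->
  mutually_independent (join_fam X1 X2) ->
  let F i := fun w => fi n1 n2 (p1 i) (p2 i) (X1 i w)%:R (X2 i w)%:R in
  let S := fun w => \sum_(i < k) F i w in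
  (forall i, ('E_P[F i])%E = 0%E) /\
  covariance P S (fun w => \sum_(i < k) (X1 i w)%:R) = 0%E /\
  covariance P S (fun w => \sum_(i < k) (X2 i w)%:R) = 0%E /\
  ('V_P[S])%E = (\sum_(i < k) 'V_P[F i])%E /\
  ('V_P[S])%E = (2 * \sum_(i < k) (p1 i / n1%:R + p2 i / n2%:R) ^+ 2)%:E.
Proof.
move=> n1p n2p p10 s1 p20 s2 hd1 hd2 hind F S.
have n10 : n1%:R != 0 :> R by rewrite pnatr_eq0 -lt0n.
have n20 : n2%:R != 0 :> R by rewrite pnatr_eq0 -lt0n.
pose A : R := n1%:R^-1. pose B : R := n2%:R^-1.
pose l1 i : R := n1%:R * p1 i. pose l2 i : R := n2%:R * p2 i.
have hl1 i : 0 <= l1 i by rewrite mulr_ge0.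
have hl2 i : 0 <= l2 i by rewrite mulr_ge0.
pose c i := cF A B (A * l1 i - B * l2 i).
have Fphi i w : F i w = phi (c i) (X1 i w)%:R (X2 i w)%:R.
  rewrite /c phi_cF /F /fi /fstar /Fpoly /A /B /l1 /l2; field.
  by rewrite n10 n20.
have hS w : S w = \sum_i phi (c i) (X1 i w)%:R (X2 i w)%:R.
  by apply: eq_bigr => i _; rewrite Fphi.
have sing := @single _ _ _ P k l1 l2 X1 X2 hl1 hl2 hd1 hd2 hind.
have su1 := @sum1 _ _ _ P k l1 l2 X1 X2 hl1 hl2 hd1 hd2 hind.
have su2 := @sum2 _ _ _ P k l1 l2 X1 X2 hl1 hl2 hd1 hd2 hind.
have EvF i : Ev (c i) (l1 i) (l2 i) = 0 by exact: Ev_cF.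
have Al1 i : A ^+ 2 * l1 i = p1 i / n1%:R by rewrite /A /l1; field.
have Bl2 i : B ^+ 2 * l2 i = p2 i / n2%:R by rewrite /B /l2; field.
have EF i : ('E_P[F i])%E = 0%E.
  rewrite unlock.
  transitivity (\int[P]_w (phi (c i) (X1 i w)%:R (X2 i w)%:R)%:E)%E.
    by apply: eq_integral => w _; rewrite Fphi.
  by rewrite (sing i (c i)).2 EvF.
have LS : S \in Lfun P 1.
  apply/Lfun1_integrable.
  apply: (eq_integrable measurableT _ _ _ (su1 c).1).
  by move=> w _ /=; rewrite hS.
have ES : ('E_P[S])%E = 0%E.
  rewrite unlock.
  transitivity (\int[P]_w (\sum_i phi (c i) (X1 i w)%:R (X2 i w)%:R)%:E)%E.
    by apply: eq_integral => w _; rewrite hS.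
  by rewrite (su1 c).2 big1 // => i _; rewrite EvF.
have cov_gen (cx : 'I_5 -> 'I_5 -> R) (cFx : 'I_k -> 'I_5 -> 'I_5 -> R) (fx : nat -> nat -> R)
    (hx : forall x y, phi cx x%:R y%:R = fx x y)
    (hFx : forall i x y, phi (c i) x y * phi cx x y = phi (cFx i) x y)
    (EvFx : forall i, Ev (cFx i) (l1 i) (l2 i) = 0) :
    covariance P S (fun w => \sum_(i < k) fx (X1 i w) (X2 i w)) = 0%E.
  have hT w : \sum_(i < k) fx (X1 i w) (X2 i w) =
      \sum_i phi ((fun=> cx) i) (X1 i w)%:R (X2 i w)%:R.
    by apply: eq_bigr => i _; rewrite hx.
  have [I2 E2] := su2 c (fun=> cx) cFx hFx.
  have [I1 _] := su1 (fun=> cx).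
  rewrite covarianceE //; first last.
  - apply/Lfun1_integrable.
    apply: (eq_integrable measurableT _ _ _ I2).
    move=> w _; congr EFin; transitivity (S w * \sum_(i < k) fx (X1 i w) (X2 i w)); last by [].
    by rewrite hS hT.
  - apply/Lfun1_integrable.
    apply: (eq_integrable measurableT _ _ _ I1).
    move=> w _; congr EFin; transitivity (\sum_(i < k) fx (X1 i w) (X2 i w)); last by [].
    by rewrite hT.
  rewrite ES mul0e sube0 unlock.
  transitivity (\int[P]_w ((\sum_i phi (c i) (X1 i w)%:R (X2 i w)%:R) *
               (\sum_j phi ((fun=> cx) j) (X1 j w)%:R (X2 j w)%:R))%:E)%E.
    apply: eq_integral => w _; congr EFin; transitivity (S w * \sum_(i < k) fx (X1 i w) (X2 i w)); first by [].
    by rewrite hS hT.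
  rewrite E2 big1 // => i _; rewrite big1 // => j _.
  by case: ifP => _; rewrite ?EvFx ?EvF ?mul0r.
have cov1 : covariance P S (fun w => \sum_(i < k) (X1 i w)%:R) = 0%E.
  apply: (cov_gen cx1 (fun i => cFx1 A B (A * l1 i - B * l2 i)) (fun x _ => x%:R)).
  - by move=> x y; rewrite phi_cx1.
  - by move=> i x y; rewrite phi_cF phi_cx1 phi_cFx1.
  - by move=> i; exact: Ev_cFx1.
have cov2 : covariance P S (fun w => \sum_(i < k) (X2 i w)%:R) = 0%E.
  apply: (cov_gen cx2 (fun i => cFx2 A B (A * l1 i - B * l2 i)) (fun _ y => y%:R)).
  - by move=> x y; rewrite phi_cx2.
  - by move=> i x y; rewrite phi_cF phi_cx2 phi_cFx2.
  - by move=> i; exact: Ev_cFx2.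
pose c2 i := cF2 A B (A * l1 i - B * l2 i).
have hcc i x y : phi (c i) x y * phi (c i) x y = phi (c2 i) x y.
  by rewrite phi_cF phi_cF2 expr2.
have Ev2 i : Ev (c2 i) (l1 i) (l2 i) = 2 * (p1 i / n1%:R + p2 i / n2%:R) ^+ 2.
  by rewrite Ev_cF2 Al1 Bl2.
have VF i : ('V_P[F i])%E = (2 * (p1 i / n1%:R + p2 i / n2%:R) ^+ 2)%:E.
  have [I E] := sing i (c2 i).
  have [I1 _] := sing i (c i).
  rewrite /variance covarianceE //; first last.
  - apply/Lfun1_integrable.
    apply: (eq_integrable measurableT _ _ _ I).
    move=> w _; congr EFin; transitivity (F i w * F i w); last by [].
    by rewrite Fphi hcc.
  - apply/Lfun1_integrable.
    apply: (eq_integrable measurableT _ _ _ I1).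
    by move=> w _; congr EFin; rewrite Fphi.
  - apply/Lfun1_integrable.
    apply: (eq_integrable measurableT _ _ _ I1).
    by move=> w _; congr EFin; rewrite Fphi.
  rewrite EF mul0e sube0 unlock -Ev2 -E.
  apply: eq_integral => w _; congr EFin; transitivity (F i w * F i w); first by [].
  by rewrite Fphi hcc.
have VS : ('V_P[S])%E = (\sum_i 2 * (p1 i / n1%:R + p2 i / n2%:R) ^+ 2)%:E.
  have [I2 E2] := su2 c c c2 hcc.
  rewrite /variance covarianceE //; first last.
  - apply/Lfun1_integrable.
    apply: (eq_integrable measurableT _ _ _ I2).
    move=> w _; congr EFin; transitivity (S w * S w); last by [].
    by rewrite hS.
  rewrite ES mul0e sube0 unlock.
  transitivity (\int[P]_w ((\sum_i phi (c i) (X1 i w)%:R (X2 i w)%:R) *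
               (\sum_j phi (c j) (X1 j w)%:R (X2 j w)%:R))%:E)%E.
    apply: eq_integral => w _; congr EFin; transitivity (S w * S w); first by [].
    by rewrite hS.
  rewrite E2; congr EFin; apply: eq_bigr => i _.
  rewrite (bigD1 i) //= eqxx big1 ?addr0 ?Ev2 // => j ji.
  by rewrite eq_sym (negbTE ji) EvF mul0r.
split; first exact: EF.
split; first exact: cov1.
split; first exact: cov2.
rewrite VS; split.
  by rewrite -sumEFin; apply: eq_bigr => i _; rewrite VF.
by rewrite mulr_sumr.
Qed.
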